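(* Let $K$ be a compact Hausdorff space, $I$ a set, and $S:c_0(I)\to C(K)$ a linear isometric embedding. Let $\{\xi_i:i\in I\}\subseteq C(K)$ be the image under $S$ of the canonical unit vector basis of $c_0(I)$ and set $G=\bigcap_{i\in I}\xi_i^{-1}(0)$. Then the image of $S$ is complemented in $C(K|G)$.
   Context: $C(K)$ is the Banach space of real-valued continuous functions on $K$ with the supremum norm; for a closed $G\subseteq K$, $C(K|G)$ denotes the closed subspace of functions in $C(K)$ vanishing on $G$. *)

(* Defs.v *)
From HB Require Import structures.
From mathcomp Require Import all_boot all_order all_algebra.
From mathcomp Require Import all_classical all_reals all_analysis.
Set Implicit Arguments. Unset Strict Implicit. Unset Printing Implicit Defensive.
Import Order.TTheory GRing.Theory Num.Theory numFieldNormedType.Exports.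
Local Open Scope classical_set_scope.
Local Open Scope ring_scope.

Definition c0 (R : realType) (I : Type) : set (I -> R) :=
  [set x | forall e : R, 0 < e -> finite_set [set i | e <= `|x i|]].

(* supremum norm of a function (0 for an empty domain) *)
Definition supnorm (R : realType) (T : Type) (f : T -> R) : R :=
  sup ([set 0] `|` range (fun t => `|f t|)).

Definition unitvec (R : realType) (I : Type) (i : I) : I -> R :=
  fun j => if pselect (j = i) then 1 else 0.

Definition CK (R : realType) (K : topologicalType) : set (K -> R) :=
  [set f : K -> R | continuous f].

Definition CKG (R : realType) (K : topologicalType) (G : set K) : set (K -> R) :=
  [set f : K -> R | continuous f /\ forall k, G k -> f k = 0].

Definition lin_isometric_embedding (R : realType) (I : Type) (K : topologicalType)
  (S : (I -> R) -> (K -> R)) : Prop :=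
  [/\ forall x, c0 x -> CK (S x),
      forall (a : R) x y, c0 x -> c0 y ->
        S (fun j => a * x j + y j) = (fun k => a * S x k + S y k) &
      forall x, c0 x -> supnorm (S x) = supnorm x].

Definition complemented_in (R : realType) (K : topologicalType)
  (V X : set (K -> R)) : Prop :=
  V `<=` X /\
  exists P : (K -> R) -> (K -> R),
    [/\ forall f, X f -> V (P f),
        forall (a : R) f g, X f -> X g ->
          P (fun k => a * f k + g k) = (fun k => a * P f k + P g k),
        exists M : R, forall f, X f -> supnorm (P f) <= M * supnorm f &
        forall f, V f -> P f = f].

(* Main.v *)
Require Import Defs.
From HB Require Import structures.
From mathcomp Require Import all_boot all_order all_algebra.
From mathcomp Require Import all_classical all_reals all_analysis.
Import Order.TTheory GRing.Theory Num.Theory numFieldNormedType.Exports.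
Local Open Scope classical_set_scope.
Local Open Scope ring_scope.

Lemma supnorm_le (R : realType) (T : Type) (f : T -> R) (B : R) :
  0 <= B -> (forall t, `|f t| <= B) -> supnorm f <= B.
Proof.
move=> B0 fB; apply: ge_sup; first by exists 0; left.
by move=> _ [->|[t _ <-]].
Qed.

Lemma le_supnorm (R : realType) (T : Type) (f : T -> R) (B : R) :
  (forall t, `|f t| <= B) -> forall t, `|f t| <= supnorm f.
Proof.
move=> fB t; apply: ub_le_sup; last by right; exists t.
exists (Num.max 0 B) => _ [->|[s _ <-]]; first by rewrite le_max lexx.
by rewrite le_max fB orbT.
Qed.

Lemma supnorm_ge0 (R : realType) (T : Type) (f : T -> R) (B : R) :
  (forall t, `|f t| <= B) -> 0 <= supnorm f.
Proof.
move=> fB; apply: ub_le_sup; last by left.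
exists (Num.max 0 B) => _ [->|[s _ <-]]; first by rewrite le_max lexx.
by rewrite le_max fB orbT.
Qed.

Lemma cont_bounded (R : realType) (K : topologicalType) (f : K -> R) :
  compact [set: K] -> continuous f -> exists B, forall t, `|f t| <= B.
Proof.
move=> hK cf.
have [[k0 _]|nK] := pselect (exists k : K, True); last first.
  by exists 0 => t; exfalso; apply: nK; exists t.
have ne : [set: K] !=set0 by exists k0.
have cc : {within [set: K], continuous (fun t => `|f t|)}.
  apply: continuous_subspaceT => x.
  exact: (continuous_comp (cf x) (@norm_continuous _ _ _)).
have [c _ cmax] := @compact_EVT_max K R (fun t => `|f t|) [set: K] ne hK cc.
by exists `|f c| => t; apply: cmax; rewrite inE.
Qed.

Definition zero_on (R : realType) (I : Type) (s : seq {classic I}) (x : I -> R) : I -> R :=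
  fun j => if (j : {classic I}) \in s then 0 else x j.
Arguments zero_on {R I}.

Lemma c0_zero_on (R : realType) (I : Type) (s : seq {classic I}) (x : I -> R) :
  c0 x -> c0 (zero_on s x).
Proof.
move=> cx e e0; apply: sub_finite_set (cx e e0) => j /=.
rewrite /zero_on; case: ifP => // _; rewrite normr0 => /(lt_le_trans e0).
by rewrite ltxx.
Qed.

Lemma unitvec_c0 (R : realType) (I : Type) (i : I) : c0 (@unitvec R I i).
Proof.
move=> e e0; apply: sub_finite_set (finite_set1 i) => j /=.
rewrite /unitvec; destruct (pselect (j = i)) as [E|E] => //=.
rewrite normr0 => /(lt_le_trans e0); by rewrite ltxx.
Qed.

Lemma unitvec_eq (R : realType) (I : Type) (i : I) : @unitvec R I i i = 1.
Proof. by rewrite /unitvec; destruct (pselect (i = i)). Qed.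

Lemma unitvec_neq (R : realType) (I : Type) (i j : I) : j <> i -> @unitvec R I i j = 0.
Proof. by move=> nji; rewrite /unitvec; destruct (pselect (j = i)). Qed.

Lemma zero_on_eval (R : realType) (I : Type) (K : topologicalType)
  (S : (I -> R) -> (K -> R)) (hS : lin_isometric_embedding S) (k : K)
  (s : seq {classic I}) (x : I -> R) :
  c0 x -> (forall j : {classic I}, j \in s -> S (@unitvec R I j) k = 0) ->
  S (zero_on s x) k = S x k.
Proof.
case: hS => _ hlin _ cx; elim: s => [|a s IH] hs.
  by congr (S _ k); apply/funext => j; rewrite /zero_on in_nil.
have -> : zero_on (a :: s) x =
    (fun j => (- zero_on s x a) * @unitvec R I a j + zero_on s x j).
  apply/funext => j; rewrite /zero_on in_cons.
  have [->|ja] := eqVneq (j : {classic I}) a.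
    by rewrite /= unitvec_eq mulr1; case: ifP => _; rewrite ?oppr0 ?add0r // addNr.
  rewrite /= unitvec_neq ?mulr0 ?add0r //.
  by move=> E; move: ja; rewrite E eqxx.
rewrite hlin; [|exact: unitvec_c0|exact: c0_zero_on].
rewrite hs ?mem_head // mulr0 add0r IH // => j js; apply: hs.
by rewrite in_cons js orbT.
Qed.

Lemma le_all_eq0 (R : realType) (r : R) : (forall e, 0 < e -> `|r| <= e) -> r = 0.
Proof.
move=> h; apply/eqP; rewrite -normr_le0; apply/ler_addgt0Pl => e e0.
by rewrite addr0; apply: h.
Qed.

Lemma eval_vanish (R : realType) (I : Type) (K : topologicalType)
  (hK : compact [set: K])
  (S : (I -> R) -> (K -> R)) (hS : lin_isometric_embedding S) (k : K)
  (x : I -> R) :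
  c0 x -> (forall j : I, x j != 0 -> S (@unitvec R I j) k = 0) -> S x k = 0.
Proof.
move=> cx hx; apply: le_all_eq0 => e e0.
have [s Ds] := (@finite_seqP {classic I} [set j : I | e <= `|x j|]).1 (cx e e0).
have sx : forall j : {classic I}, j \in s -> S (@unitvec R I j) k = 0.
  move=> j js; apply: hx; have : [set` s] j by [].
  rewrite -Ds /= => ej; apply/eqP => xj0; move: ej; rewrite xj0 normr0.
  by move=> /(lt_le_trans e0); rewrite ltxx.
rewrite -(@zero_on_eval _ _ _ _ hS k s x cx sx).
have cz := @c0_zero_on _ _ s x cx.
case: (hS) => hC _ hN.
have [B hB] := @cont_bounded _ _ _ hK (hC _ cz).
apply: le_trans (@le_supnorm _ _ _ _ hB k) _; rewrite hN //.
apply: supnorm_le; first exact: ltW.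
move=> j; rewrite /zero_on; case: ifP => js; first by rewrite normr0 ltW.
apply: ltW; rewrite ltNge; apply/negP => ej.
have : [set j : I | e <= `|x j|] j by [].
by rewrite Ds /= js.
Qed.

Lemma near_cont (R : realType) (K : topologicalType) (g : K -> R) (k : K) (r : R) :
  continuous g -> 0 < r -> nbhs k [set t | `|g k - g t| < r].
Proof. by move=> cg r0; exact: (cg k _ (nbhsx_ballx (g k) r r0)). Qed.

Lemma supnorm_unitvec (R : realType) (I : Type) (i : I) : supnorm (@unitvec R I i) = 1.
Proof.
have hb : forall j, `|@unitvec R I i j| <= 1.
  by move=> j; rewrite /unitvec; destruct (pselect (j = i)); rewrite /= ?normr1 ?normr0.
apply/eqP; rewrite eq_le supnorm_le //=.
by have := @le_supnorm _ _ _ _ hb i; rewrite unitvec_eq normr1.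
Qed.

Theorem lemma2p3 (R : realType) (K : topologicalType) (I : Type)
  (hK : compact [set: K]) (hH : hausdorff_space K)
  (S : (I -> R) -> (K -> R)) (hS : lin_isometric_embedding S) :
  let xi := fun i : I => S (@unitvec R I i) in
  let G := [set k : K | forall i, xi i k = 0] in
  complemented_in (S @` (@c0 R I)) (@CKG R K G).
Proof.
move=> xi G; have [hC hlin hN] := hS.
have cxi : forall i, continuous (xi i) by move=> i; exact: (hC _ (@unitvec_c0 R I i)).
have nxi : forall i, supnorm (xi i) = 1.
  by move=> i; rewrite /xi hN ?supnorm_unitvec //; exact: unitvec_c0.
have bxi : forall i t, `|xi i t| <= 1.
  move=> i t; have [B hB] := @cont_bounded _ _ _ hK (cxi i).
  by rewrite -(nxi i); exact: (@le_supnorm _ _ _ _ hB).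
have exk : forall i, exists k, `|xi i k| = 1.
  move=> i.
  have [[k0 _]|nK] := pselect (exists k : K, True); last first.
    exfalso; have : supnorm (xi i) <= 0.
      by apply: supnorm_le => // t; exfalso; apply: nK; exists t.
    by rewrite nxi ler10.
  have ne : [set: K] !=set0 by exists k0.
  have cc : {within [set: K], continuous (fun t => `|xi i t|)}.
    apply: continuous_subspaceT => x.
    exact: (continuous_comp (cxi i x) (@norm_continuous _ _ _)).
  have [c _ cmax] := @compact_EVT_max K R (fun t => `|xi i t|) [set: K] ne hK cc.
  exists c; apply/eqP; rewrite eq_le bxi /= -(nxi i).
  by apply: supnorm_le => // t; apply: cmax; rewrite inE.
have [kp hkp] := choice exk.
pose eps i := xi i (kp i).
have eps2 : forall i, eps i * eps i = 1.
  by move=> i; rewrite -expr2 -real_normK ?num_real // hkp expr1n.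
have orth : forall i j, j <> i -> xi j (kp i) = 0.
  move=> i j ji; set c := xi j (kp i).
  pose y := fun l => (eps i * c) * @unitvec R I j l + @unitvec R I i l.
  have cy : c0 y.
    move=> e e0; apply: (@sub_finite_set _ _ ([set i] `|` [set j])); last first.
      by rewrite finite_setU; split; exact: finite_set1.
    move=> l /=; have [->|li] := pselect (l = i); first by left.
    have [->|lj] := pselect (l = j); first by right.
    rewrite /y (@unitvec_neq R I _ _ li) (@unitvec_neq R I _ _ lj) mulr0 addr0 normr0.
    by move=> /(lt_le_trans e0); rewrite ltxx.
  have Sy : S y = fun k => (eps i * c) * xi j k + xi i k.
    by rewrite /y hlin //; exact: unitvec_c0.
  have hy : forall l, `|y l| <= 1.
    move=> l; rewrite /y; have [->|li] := pselect (l = i).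
      by rewrite unitvec_eq (@unitvec_neq R I _ _ (nesym ji)) mulr0 add0r normr1.
    rewrite (@unitvec_neq R I _ _ li) addr0; have [->|lj] := pselect (l = j).
      by rewrite unitvec_eq mulr1 normrM hkp mul1r bxi.
    by rewrite (@unitvec_neq R I _ _ lj) mulr0 normr0.
  have [B hB] := @cont_bounded _ _ _ hK (hC _ cy).
  have := @le_supnorm _ _ _ _ hB (kp i); rewrite hN // Sy.
  move=> /le_trans /(_ (@supnorm_le _ _ _ _ ler01 hy)).
  have -> : eps i * c * c + xi i (kp i) = eps i * (c * c + 1).
    by rewrite /eps mulrDr mulr1 mulrA.
  rewrite normrM hkp mul1r ger0_norm; last by rewrite addr_ge0 // -expr2 sqr_ge0.
  rewrite -[X in _ <= X]add0r lerD2r => cc.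
  by apply/eqP; rewrite -sqrf_eq0 eq_le sqr_ge0 andbT expr2.
have evB : forall x i, c0 x -> S x (kp i) = eps i * x i.
  move=> x i cx; pose x' := zero_on [:: (i : {classic I})] x.
  have cx' : c0 x' := @c0_zero_on _ _ _ x cx.
  have x'0 : S x' (kp i) = 0.
    apply: (@eval_vanish _ _ _ hK _ hS) => // j; rewrite /x' /zero_on.
    case: ifP => [_|]; first by rewrite eqxx.
    rewrite in_cons in_nil orbF => /negbT ji _; apply: orth => E.
    by move: ji; rewrite E eqxx.
  have -> : S x = S (fun j => x i * @unitvec R I i j + x' j).
    congr S; apply/funext => j; rewrite /x' /zero_on in_cons in_nil orbF.
    have [E|ji] := eqVneq (j : {classic I}) (i : {classic I}).
      by rewrite E unitvec_eq mulr1 addr0.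
    rewrite (@unitvec_neq R I _ _) ?mulr0 ?add0r // => E; move: ji.
    by rewrite E eqxx.
  rewrite hlin //; last exact: unitvec_c0.
  by rewrite x'0 addr0 mulrC.
have VX : forall x, c0 x -> CKG G (S x).
  move=> x cx; split; first exact: hC.
  move=> k Gk; apply: (@eval_vanish _ _ _ hK _ hS) => // j _; exact: Gk.
have seqc0 : forall f, CKG G f -> c0 (fun i => eps i * f (kp i)).
  move=> f [cf fG] e e0.
  pose J := [set i | e <= `|f (kp i)|].
  apply: (@sub_finite_set _ _ J); first by move=> i /=; rewrite normrM hkp mul1r.
  have [//|infJ] := pselect (finite_set J).
  pose Df := @finite_set I.
  pose Bf := fun D : set I => kp @` (J `\` D).
  have hF : Filter (filter_from Df Bf).
    apply: filter_from_filter; first by exists set0; exact: finite_set0.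
    move=> D1 D2 f1 f2; exists (D1 `|` D2); first by rewrite /Df finite_setU.
    move=> _ [l [Jl nl] <-]; split; exists l => //; split => // ?; apply: nl.
      by left.
    by right.
  have hP : ProperFilter (filter_from Df Bf).
    apply: filter_from_proper hF _ => D0 fD0.
    have [[l [Jl nl]]|no] := pselect (exists l, J l /\ ~ D0 l).
      by exists (kp l), l.
    exfalso; apply: infJ; apply: sub_finite_set fD0 => l Jl.
    by case: (pselect (D0 l)) => // nl; exfalso; apply: no; exists l.
  have FT : filter_from Df Bf [set: K] by exists set0; [exact: finite_set0|].
  have [k [_ ck]] := hK _ hP FT.
  have FB : forall D, Df D -> filter_from Df Bf (Bf D) by move=> D fD; exists D.
  have ek : e <= `|f k|.
    rewrite leNgt; apply/negP => fk.
    have nb := @near_cont _ _ f k (e - `|f k|) cf; rewrite subr_gt0 in nb.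
    have [_ [[l [Jl _] <-] hl]] := ck _ _ (FB _ (@finite_set0 I)) (nb fk).
    move: hl => /=; rewrite ltrBrDl => hl.
    have := ler_normB (f k) (f k - f (kp l)).
    rewrite opprB addrCA subrr addr0 => /le_lt_trans /(_ hl).
    by rewrite ltNge Jl.
  have Gk : G k.
    move=> j; apply/eqP; apply: contraT => cj.
    have nb := @near_cont _ _ (xi j) k `|xi j k| (cxi j); rewrite normr_gt0 in nb.
    have [_ [[l [Jl nl] <-] hl]] := ck _ _ (FB _ (finite_set1 j)) (nb cj).
    move: hl => /=; rewrite orth ?subr0 ?ltxx // => E.
    by apply: nl; rewrite E.
  by move: ek; rewrite fG // normr0 leNgt e0.
split; first by move=> _ [x cx <-]; exact: VX.
exists (fun f => S (fun i => eps i * f (kp i))); split.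
- by move=> f /seqc0 cf; exists (fun i => eps i * f (kp i)).
- move=> a f g Xf Xg.
  rewrite -hlin; [|exact: seqc0|exact: seqc0].
  by congr S; apply/funext => i; rewrite mulrDr mulrCA.
- exists 1 => f [cf fG]; rewrite mul1r hN; last exact: seqc0.
  have [B hB] := @cont_bounded _ _ _ hK cf.
  apply: supnorm_le; first exact: (@supnorm_ge0 _ _ _ _ hB).
  move=> i; rewrite normrM hkp mul1r; exact: (@le_supnorm _ _ _ _ hB).
- move=> _ [x cx <-]; congr S; apply/funext => i.
  by rewrite evB // mulrA eps2 mul1r.
Qed.
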